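(* Let $P$ be a monotone irreducible positive recurrent stochastic kernel on $\mathbb{N}=\{1,2,\dots\}$ with stationary distribution $\pi>0$, and let $N\ge2$. Let $P_N$ be the truncated kernel on $I_N=\{1,\dots,N\}$ defined by: for $x<N$, $P_N(x,y)=P(x,y)$ for $y<N$ and $P_N(x,N)=\sum_{z\ge N}P(x,z)$; and $P_N(N,y)=\overline{\pi}(N)^{-1}\sum_{z\ge N}\pi(z)P(z,y)$ for $y<N$, $P_N(N,N)=\overline{\pi}(N)^{-1}\sum_{z\ge N}\pi(z)\sum_{u\ge N}P(z,u)$, where $\overline{\pi}(N)=\sum_{z\ge N}\pi(z)$. Then $P_N$ is a monotone kernel on $I_N$, and it has a nonnegative Siegmund dual $\widehat{P}_N$ on $I_N$, i.e. there is a matrix $\widehat{P}_N=(\widehat{P}_N(x,y):x,y\in I_N)$ with nonnegative entries satisfying $H^S\widehat{P}_N^{\,\prime}=P_NH^S$, and $N$ is an absorbing state for $\widehat{P}_N$ (that is, $\widehat{P}_N(N,y)=\delta_{y,N}$ for $y\in I_N$).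
   Context: A stochastic kernel $Q$ on $I$ (with $I=\mathbb{N}$ or $I=I_N$) is monotone if for every $y\in I$ the map $x\mapsto\sum_{z\le y}Q(x,z)$ is decreasing in $x\in I$. The Siegmund kernel on $I_N$ is $H^S(x,y)=\mathbf{1}(x\le y)$, $x,y\in I_N$, and $M'$ denotes the transpose of a matrix $M$. *)

(* Defs.v *)
From HB Require Import structures.
From mathcomp Require Import all_boot all_order all_algebra.
From mathcomp Require Import all_classical all_reals all_analysis.
Set Implicit Arguments. Unset Strict Implicit. Unset Printing Implicit Defensive.
Import Order.TTheory GRing.Theory Num.Theory.
Import numFieldNormedType.Exports.
Local Open Scope classical_set_scope.
Local Open Scope ring_scope.

(* CONVENTION: the paper's state space N = {1,2,...} is encoded by nat,
   state k : nat standing for the paper's state k+1.  Likewise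
   I_N = {1,...,N} is encoded by 'I_N, i : 'I_N standing for i+1.
   In particular the paper's state N is the ordinal with value N.-1. *)

Section Kernels.
Variable R : realType.

Definition rsum (m : nat) (u : nat -> R) : R :=
  limn (fun n => \sum_(m <= i < n) u i).

Definition stochastic (P : nat -> nat -> R) : Prop :=
  (forall x y, 0 <= P x y) /\ (forall x, (series (P x) @ \oo --> (1:R))).

Fixpoint kpow (P : nat -> nat -> R) (n : nat) : nat -> nat -> R :=
  match n with
  | 0 => fun x y => (x == y)%:R
  | n'.+1 => fun x y => rsum 0 (fun z => kpow P n' x z * P z y)
  end.

Definition irreducible (P : nat -> nat -> R) : Prop :=
  forall x y, exists n, 0 < kpow P n x y.

(* fpass P n x y = probability that the first visit to y (at a time >= 1)
   happens at time n.+1, starting from x. *)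
Fixpoint fpass (P : nat -> nat -> R) (n : nat) : nat -> nat -> R :=
  match n with
  | 0 => fun x y => P x y
  | n'.+1 => fun x y => rsum 0 (fun z => if z == y then 0 else P x z * fpass P n' z y)
  end.

Definition positive_recurrent (P : nat -> nat -> R) : Prop :=
  forall x,
    (series (fun n => fpass P n x x) @ \oo --> (1:R)) /\
    cvg (series (fun n => n.+1%:R * fpass P n x x) @ \oo).

Definition stationary_distribution (P : nat -> nat -> R) (pi : nat -> R) : Prop :=
  (forall x, 0 <= pi x) /\ (series pi @ \oo --> (1:R)) /\
  (forall y, (series (fun x => pi x * P x y) @ \oo --> pi y)).

Definition kmonotone (P : nat -> nat -> R) : Prop :=
  forall y x x', (x <= x')%N ->
    \sum_(0 <= z < y.+1) P x' z <= \sum_(0 <= z < y.+1) P x z.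

Definition stochastic_mx (N : nat) (Q : 'M[R]_N) : Prop :=
  (forall x y, 0 <= Q x y) /\ (forall x, \sum_(y < N) Q x y = 1).

Definition monotone_mx (N : nat) (Q : 'M[R]_N) : Prop :=
  stochastic_mx Q /\
  forall y x x' : 'I_N, (x <= x')%N ->
    \sum_(z < N | (z <= y)%N) Q x' z <= \sum_(z < N | (z <= y)%N) Q x z.

Definition siegmund (N : nat) : 'M[R]_N := \matrix_(i, j) ((i <= j)%N)%:R.

(* tail mass pibar(N) = sum_{z >= N} pi(z)  (paper's N is index N.-1) *)
Definition pibar (pi : nat -> R) (N : nat) : R := rsum N.-1 pi.

Definition truncP (P : nat -> nat -> R) (pi : nat -> R) (N : nat) : 'M[R]_N :=
  \matrix_(i, j)
    if (i < N.-1)%N then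
      (if (j < N.-1)%N then P i j else rsum N.-1 (P i))
    else
      (if (j < N.-1)%N then
         (pibar pi N)^-1 * rsum N.-1 (fun z => pi z * P z j)
       else
         (pibar pi N)^-1 * rsum N.-1 (fun z => pi z * rsum N.-1 (P z))).

End Kernels.

(* Main.v *)
Require Import Defs.
From HB Require Import structures.
From mathcomp Require Import all_boot all_order all_algebra.
From mathcomp Require Import all_classical all_reals all_analysis.
From mathcomp Require Import lra.
Import Order.TTheory GRing.Theory Num.Theory.
Import numFieldNormedType.Exports.
Local Open Scope classical_set_scope.
Local Open Scope ring_scope.
Section Ana.
Context {R : realType}.
Implicit Types (u v : nat -> R).

Lemma ser_tail u a m : series u @ \oo --> a ->
  (fun n => \sum_(m <= i < n) u i) @ \oo --> a - \sum_(0 <= i < m) u i.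
Proof.
move=> hu.
have H : (fun n => series u n - \sum_(0 <= i < m) u i) @ \oo --> a - \sum_(0 <= i < m) u i.
  by apply: cvgB => //; exact: cvg_cst.
apply: cvg_trans H; apply: near_eq_cvg; near=> n.
have hmn : (m <= n)%N by near: n; exact: nbhs_infty_ge.
rewrite /series /= (big_cat_nat (leq0n m) hmn) /=.
by rewrite addrC addrK.
Unshelve. all: by end_near.
Qed.

Lemma rsum_eq u a m : series u @ \oo --> a -> rsum m u = a - \sum_(0 <= i < m) u i.
Proof. by move=> hu; rewrite /rsum; apply: cvg_lim => //; exact: ser_tail. Qed.

Lemma tail_ge0 u a m : series u @ \oo --> a -> (forall i, (m <= i)%N -> 0 <= u i) ->
  0 <= a - \sum_(0 <= i < m) u i.
Proof.
move=> hu h0; have h := cvgr_to_ge (ser_tail _ _ m hu); apply: h; near=> n.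
rewrite big_nat_cond; apply: sumr_ge0 => i /andP[/andP[hm _] _]; exact: h0.
Unshelve. all: by end_near.
Qed.

Lemma tail_gt0 u a m : series u @ \oo --> a -> (forall i, (m <= i)%N -> 0 <= u i) ->
  0 < u m -> 0 < a - \sum_(0 <= i < m) u i.
Proof.
move=> hu h0 hp; apply: (lt_le_trans hp).
have h := cvgr_to_ge (ser_tail _ _ m hu); apply: h; near=> n.
have hmn : (m < n)%N by near: n; exact: nbhs_infty_ge.
rewrite big_ltn // lerDl big_nat_cond; apply: sumr_ge0 => i /andP[/andP[hm _] _]; apply: h0.
exact: ltnW.
Unshelve. all: by end_near.
Qed.

Lemma ser_B u v a b : series u @ \oo --> a -> series v @ \oo --> b ->
  series (fun i => u i - v i) @ \oo --> a - b.
Proof.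
move=> hu hv.
have -> : series (fun i => u i - v i) = series u - series v.
  by apply/funext => n; rewrite /series /= sumrB.
exact: cvgB.
Qed.

Lemma ser_M u a c : series u @ \oo --> a -> series (fun i => c * u i) @ \oo --> c * a.
Proof.
move=> hu.
have -> : series (fun i => c * u i) = (fun n => c * series u n).
  by apply/funext => n; rewrite /series /= mulr_sumr.
exact: cvgMl_tmp.
Qed.

Lemma ser_sum (f : nat -> nat -> R) (a : nat -> R) k :
  (forall j, series (f j) @ \oo --> a j) ->
  series (fun i => \sum_(0 <= j < k) f j i) @ \oo --> \sum_(0 <= j < k) a j.
Proof.
move=> hf; elim: k => [|k IH].
  have -> : series (fun i => \sum_(0 <= j < 0) f j i) = (fun _ => 0).
    by apply/funext => n; rewrite /series /=; apply: big1 => i _; rewrite big_geq.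
  by rewrite big_geq //; exact: cvg_cst.
have -> : series (fun i => \sum_(0 <= j < k.+1) f j i) =
   series (fun i => \sum_(0 <= j < k) f j i) + series (f k).
  apply/funext => n; rewrite /series /= [RHS]/GRing.add /= -big_split /=; apply: eq_bigr => i _; rewrite big_nat_recr //.
have e : \sum_(0 <= j < k.+1) a j = \sum_(0 <= j < k) a j + a k by rewrite big_nat_recr.
have h := cvgD IH (hf k). rewrite e; exact: h.
Qed.
End Ana.
Section Sieg.
Context {R : realType}.

Lemma siegmund_dual n (Q : 'M[R]_n.+1) : monotone_mx Q ->
  exists Phat : 'M[R]_n.+1,
    (forall x y, 0 <= Phat x y) /\
    siegmund R n.+1 *m Phat^T = Q *m siegmund R n.+1 /\
    (forall x y : 'I_n.+1, val x = n -> Phat x y = (val y == n)%:R).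
Proof.
move=> [[Q0 Q1] Qm].
pose Fq (i : 'I_n.+1) (y : 'I_n.+1) := \sum_(z < n.+1 | (z <= y)%N) Q i z.
pose G (x : nat) (y : 'I_n.+1) := if (x < n.+1)%N then Fq (inord x) y else 0.
have Fmax : forall i (y : 'I_n.+1), val y = n -> Fq i y = 1.
  move=> i y hy; rewrite /Fq -(Q1 i); apply: eq_bigl => z; rewrite hy -ltnS ltn_ord.
  done.
exists (\matrix_(i, j) (G j i - G j.+1 i)).
split; [|split].
- move=> x y; rewrite mxE subr_ge0 /G ltn_ord.
  case: ifP => hy.
    apply: Qm => /=; rewrite !inordK //; exact: ltnW.
  rewrite /Fq; apply: sumr_ge0 => z _; exact: Q0.
- apply/matrixP => x y; rewrite !mxE.
  have -> : \sum_j siegmund R n.+1 x j * (\matrix_(i, j0) (G j0 i - G j0.+1 i))^T j y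
      = \sum_(x <= j < n.+1) - (G j.+1 y - G j y).
    rewrite big_geq_mkord [RHS]big_mkcond /=; apply: eq_bigr => j _.
    rewrite !mxE; case: (x <= j)%N; rewrite ?mul1r ?mul0r //= opprB //.
  rewrite sumrN telescope_sumr; last exact: ltnW.
  rewrite /G ltnn ltn_ord opprB subr0 /Fq inord_val big_mkcond /=.
  by apply: eq_bigr => j _; rewrite mxE; case: (j <= y)%N; rewrite ?mulr1 ?mulr0.
- move=> x y hx; rewrite mxE /G ltn_ord inord_val.
  rewrite (Fmax _ x hx); case: ifP => hy.
    rewrite Fmax //.
    have : (val y != n) by rewrite neq_ltn -ltnS hy.
    by move/negbTE => ->; rewrite subrr.
  have -> : (val y == n) by rewrite eqn_leq -ltnS ltn_ord /= leqNgt -ltnS hy.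
  by rewrite subr0.
Qed.
End Sieg.

Lemma ser_sumo {R : realType} (f : nat -> nat -> R) (a : nat -> R) k :
  (forall j, series (f j) @ \oo --> a j) ->
  series (fun i => \sum_(j < k) f j i) @ \oo --> \sum_(j < k) a j.
Proof.
move=> hf; have := ser_sum f a k hf.
have -> : (fun i => \sum_(0 <= j < k) f j i) = (fun i => \sum_(j < k) f j i).
  by apply/funext => i; rewrite big_mkord.
by rewrite big_mkord.
Qed.

Lemma sum_le_ord {R : realType} n (y : 'I_n) (g : nat -> R) :
  \sum_(z < n | (z <= y)%N) g z = \sum_(0 <= z < y.+1) g z.
Proof.
rewrite big_mkord (big_ord_widen n g (ltn_ord y)); apply: eq_bigl => z.
by rewrite ltnS.
Qed.

Theorem proposition4 (R : realType) (P : nat -> nat -> R) (pi : nat -> R) (N : nat) :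
  stochastic P -> kmonotone P -> irreducible P -> positive_recurrent P ->
  stationary_distribution P pi -> (forall x, 0 < pi x) ->
  (2 <= N)%N ->
  monotone_mx (truncP P pi N) /\
  exists Phat : 'M[R]_N,
    (forall x y, 0 <= Phat x y) /\
    siegmund R N *m Phat^T = truncP P pi N *m siegmund R N /\
    (forall x y : 'I_N, val x = N.-1 -> Phat x y = (val y == N.-1)%:R).
Proof.
move=> [P0 P1] Pm _ _ [pi0 [hpi hst]] pipos.
case: N => [|n] // hN.
suff hmon : monotone_mx (truncP P pi n.+1) by split => //; exact: siegmund_dual.
have T1 : forall x, rsum n (P x) = 1 - \sum_(i < n) P x i.
  by move=> x; rewrite (rsum_eq _ _ n (P1 x)) big_mkord.
have T1g : forall x, 0 <= 1 - \sum_(i < n) P x i.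
  by move=> x; have := tail_ge0 _ _ n (P1 x) (fun i _ => P0 x i); rewrite big_mkord.
have T2 : forall j, rsum n (fun z => pi z * P z j) = pi j - \sum_(z < n) pi z * P z j.
  by move=> j; rewrite (rsum_eq _ _ n (hst j)) big_mkord.
have T2g : forall j, 0 <= pi j - \sum_(z < n) pi z * P z j.
  move=> j; have := tail_ge0 _ _ n (hst j) (fun i _ => mulr_ge0 (pi0 i) (P0 i j)).
  by rewrite big_mkord.
have T4 : series (fun z => pi z * rsum n (P z)) @ \oo --> 1 - \sum_(j < n) pi j.
  have -> : (fun z => pi z * rsum n (P z)) = (fun z => pi z - \sum_(j < n) pi z * P z j).
    by apply/funext => z; rewrite T1 mulrBr mulr1 mulr_sumr.
  exact: ser_B hpi (ser_sumo (fun j z => pi z * P z j) pi n hst).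
pose S := \sum_(j < n) pi j.
pose C := \sum_(z < n) pi z * rsum n (P z).
have T5 : rsum n (fun z => pi z * rsum n (P z)) = (1 - S) - C.
  by rewrite (rsum_eq _ _ n T4) big_mkord.
have T5g : 0 <= (1 - S) - C.
  have := tail_ge0 _ _ n T4 (fun i _ => mulr_ge0 (pi0 i) _).
  rewrite big_mkord; apply => i; rewrite T1; exact: T1g.
have pb : pibar pi n.+1 = 1 - S by rewrite /pibar /= (rsum_eq _ _ n hpi) big_mkord.
have pbpos : 0 < 1 - S.
  by have := tail_gt0 _ _ n hpi (fun i _ => pi0 i) (pipos n); rewrite big_mkord.

pose Q := truncP P pi n.+1.
have QE : forall i j : 'I_n.+1, Q i j =
   if (i < n)%N then (if (j < n)%N then P i j else 1 - \sum_(k < n) P i k)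
   else (if (j < n)%N then (1 - S)^-1 * (pi j - \sum_(z < n) pi z * P z j)
         else (1 - S)^-1 * ((1 - S) - C)).
  by move=> i j; rewrite /Q /truncP mxE /= T1 T2 T5 pb.
have Hrow : forall i, \sum_(j < n.+1) Q i j = 1.
  move=> i; rewrite big_ord_recr /=; case hi: (i < n)%N.
    rewrite (eq_bigr (fun j : 'I_n => P i j)); last by move=> j _; rewrite QE /= (ltn_ord j) hi.
    by rewrite QE hi /= ltnn addrC subrK.
  rewrite (eq_bigr (fun j : 'I_n => (1 - S)^-1 * (pi j - \sum_(z < n) pi z * P z j))); last first.
    by move=> j _; rewrite QE /= (ltn_ord j) hi.
  rewrite QE hi /= ltnn -mulr_sumr -mulrDr.
  have HC : C = S - \sum_(j < n) \sum_(z < n) pi z * P z j.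
    rewrite /C [in RHS]exchange_big /= /S -sumrB; apply: eq_bigr => z _.
    by rewrite T1 mulrBr mulr1 mulr_sumr.
  rewrite sumrB HC -/S [X in _ * X](_ : _ = 1 - S); last by lra.
  by rewrite mulVf //; exact: lt0r_neq0.
split; first split.
- move=> i j; rewrite QE; case: ifP => _; case: ifP => _ //.
  + by apply: mulr_ge0; [rewrite invr_ge0; exact: ltW|].
  + by apply: mulr_ge0; [rewrite invr_ge0; exact: ltW|].
- exact: Hrow.
move=> y x x' hxx'.
case hy: (y < n)%N; last first.
  have full : forall i, \sum_(z < n.+1 | (z <= y)%N) Q i z = 1.
    move=> i; rewrite -(Hrow i); apply: eq_bigl => z.
    by apply: (leq_trans (_ : (z <= n)%N)); [rewrite -ltnS | rewrite leqNgt hy].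
  by rewrite !full.
pose Fx (i : nat) := \sum_(0 <= z < y.+1) P i z.
pose G := \sum_(0 <= z < y.+1) (pi z - \sum_(k < n) pi k * P k z).
have Fr : forall i : 'I_n.+1, \sum_(z < n.+1 | (z <= y)%N) Q i z =
    if (i < n)%N then Fx i else (1 - S)^-1 * G.
  move=> i; case: ifP => hi.
    rewrite /Fx -(sum_le_ord _ y (P i)); apply: eq_bigr => z hz.
    by rewrite QE hi (leq_ltn_trans hz hy).
  rewrite /G -(sum_le_ord _ y (fun z => pi z - \sum_(k < n) pi k * P k z)) mulr_sumr.
  by apply: eq_bigr => z hz; rewrite QE hi (leq_ltn_trans hz hy).
rewrite !Fr; case: ifP => hx'; case: ifP => hx //.
- exact: Pm.
- by rewrite (leq_ltn_trans hxx' hx') in hx.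
rewrite ler_pdivrMl //.
have hw := ser_B _ _ _ _ (ser_M _ _ (Fx x) hpi) (ser_sum (fun j z => pi z * P z j) pi y.+1 hst).
have H := tail_ge0 _ _ n hw.
have H' : 0 <= Fx x * 1 - \sum_(0 <= j < y.+1) pi j -
   \sum_(0 <= i < n) (Fx x * pi i - \sum_(0 <= j < y.+1) pi i * P i j).
  apply: H => z hz; rewrite -mulr_sumr (mulrC (Fx x)) -mulrBr.
  apply: mulr_ge0 => //; rewrite subr_ge0; apply: Pm.
  exact: ltnW (leq_trans hx hz).
have E1 : \sum_(0 <= i < n) (Fx x * pi i - \sum_(0 <= j < y.+1) pi i * P i j)
   = Fx x * S - \sum_(0 <= j < y.+1) \sum_(k < n) pi k * P k j.
  rewrite sumrB -mulr_sumr exchange_big /= /S -(big_mkord xpredT pi); congr (_ - _).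
  by apply: eq_bigr => j _; rewrite big_mkord.
rewrite E1 mulr1 in H'.
rewrite /G sumrB; lra.
Qed.
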